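(* Let $\psi\in\mathbb{R}[x]$ have a zero of multiplicity $2$ at $0$, and let $\psi=\psi_2+\dots+\psi_t$ be its expansion into homogeneous polynomials $\psi_j$ of degree $j$, with $\psi_2\neq 0$ and $\psi_t\ne 0$. If the Fischer operator $F_\psi:\mathbb{R}[x]\to\mathbb{R}[x]$ is surjective, then the Fischer operator $F_{\psi_2}:\mathbb{R}[x]\to\mathbb{R}[x]$ is bijective. Moreover, $F_\psi$ is bijective.
   Context: $\mathbb{R}[x]$ denotes the real polynomials in $d$ variables, $\Delta$ the Laplacian, and for a polynomial $\varphi$ the Fischer operator is $F_\varphi(q)=\Delta(\varphi q)$ for $q\in\mathbb{R}[x]$. A polynomial is homogeneous of degree $j$ if $f(rx)=r^jf(x)$ for all $r>0$, $x\in\mathbb{R}^d$. The multiplicity of a zero $x_0$ of $\psi$ is the largest $N$ such that all partial derivatives $\partial^\alpha\psi(x_0)$ with $|\alpha|\le N-1$ vanish. *)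

(* Defs.v *)
From mathcomp Require Import all_boot all_order all_algebra.
From mathcomp Require Import reals.
From mathcomp Require Import mpoly.
Set Implicit Arguments. Unset Strict Implicit. Unset Printing Implicit Defensive.
Import Order.TTheory GRing.Theory Num.Theory.
Local Open Scope ring_scope.

Definition laplacian {R : realType} {d : nat} (p : {mpoly R[d]}) : {mpoly R[d]} :=
  \sum_(i < d) ((p^`M(i))^`M(i)).

Definition Fischer {R : realType} {d : nat} (phi : {mpoly R[d]}) :
  {mpoly R[d]} -> {mpoly R[d]} :=
  fun q => laplacian (phi * q).

Definition vanishes_to {R : realType} {d : nat} (N : nat) (psi : {mpoly R[d]}) : Prop :=
  forall m : 'X_{1..d}, (mdeg m < N)%N -> (psi^`M[m]).@[fun _ : 'I_d => 0] = 0.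

Definition zero_mult_at0 {R : realType} {d : nat} (psi : {mpoly R[d]}) (N : nat) : Prop :=
  vanishes_to N psi /\ forall N', vanishes_to N' psi -> (N' <= N)%N.

(* Main.v *)
Require Import Defs.
From HB Require Import structures.
From mathcomp Require Import all_boot all_order all_algebra.
From mathcomp Require Import reals.
From mathcomp Require Import mpoly.
From mathcomp Require Import zify.
Set Implicit Arguments. Unset Strict Implicit. Unset Printing Implicit Defensive.
Import Order.TTheory GRing.Theory Num.Theory.
Local Open Scope ring_scope.

Section Fin.
Variables (R : realType) (d : nat) (B : seq 'X_{1..d}).
Hypothesis uB : uniq B.
Variable f : {mpoly R[d]} -> {mpoly R[d]}.
Hypothesis flin : forall a p q, f (a *: p + q) = a *: f p + f q.

Definition inB (p : {mpoly R[d]}) := forall m, m \notin B -> p@_m = 0.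
Hypothesis stab : forall p, inB p -> inB (f p).

Local Notation n := (size B).
Definition emb (u : 'rV[R]_n) : {mpoly R[d]} :=
  \sum_(i < n) u 0 i *: 'X_[nth 0%MM B i].
Definition crd (p : {mpoly R[d]}) : 'rV[R]_n := \row_(i < n) p@_(nth 0%MM B i).

Lemma emb_coef u m : (emb u)@_m = \sum_(i < n) u 0 i * (nth 0%MM B i == m)%:R.
Proof.
rewrite /emb raddf_sum; apply: eq_bigr => i _ /=; by rewrite mcoeffZ mcoeffX.
Qed.

Lemma inB_emb u : inB (emb u).
Proof.
move=> m mB; rewrite emb_coef big1 // => i _.
case: eqP => [e|]; last by rewrite mulr0.
by move: mB; rewrite -e mem_nth.
Qed.

Lemma crd_emb u : crd (emb u) = u.
Proof.
apply/rowP => j; rewrite mxE emb_coef (bigD1 j) //= eqxx mulr1 big1 ?addr0 //.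
move=> i ij; rewrite nth_uniq //; case: eqP => [/val_inj e|]; [by rewrite e eqxx in ij | by rewrite mulr0].
Qed.

Lemma emb_crd p : inB p -> emb (crd p) = p.
Proof.
move=> pB; apply/mpolyP => m; rewrite emb_coef.
have [mB|mB] := boolP (m \in B); last first.
  rewrite pB // big1 // => i _; case: eqP => [e|]; last by rewrite mulr0.
  by move: mB; rewrite -e mem_nth.
have im : (index m B < n)%N by rewrite index_mem.
rewrite (bigD1 (Ordinal im)) //= nth_index // eqxx mulr1 mxE /= nth_index //.
rewrite big1 ?addr0 // => i ij; rewrite mxE.
case: eqP => [e|]; last by rewrite mulr0.
case/eqP: ij; apply: val_inj => /=; by rewrite -e index_uniq.
Qed.

Lemma crdD a p q : crd (a *: p + q) = a *: crd p + crd q.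
Proof. by apply/rowP => j; rewrite !mxE mcoeffD mcoeffZ. Qed.

Lemma embD a u v : emb (a *: u + v) = a *: emb u + emb v.
Proof.
rewrite /emb scaler_sumr -big_split; apply: eq_bigr => i _.
by rewrite !mxE scalerDl scalerA.
Qed.

Definition gfun (u : 'rV[R]_n) : 'rV[R]_n := crd (f (emb u)).
Fact gfun_lin : linear gfun.
Proof. by move=> a u v; rewrite /gfun embD flin crdD. Qed.
HB.instance Definition _ := GRing.isLinear.Build R 'rV[R]_n 'rV[R]_n *:%R gfun gfun_lin.

Definition Amx := lin1_mx gfun.

Lemma crd0 : crd 0 = 0.
Proof. by apply/rowP => j; rewrite !mxE mcoeff0. Qed.
Lemma emb0 : emb 0 = 0.
Proof. by rewrite /emb big1 // => i _; rewrite mxE scale0r. Qed.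

Lemma fin_surj_inj :
  (forall g, inB g -> exists p, inB p /\ f p = g) ->
  forall p, inB p -> f p = 0 -> p = 0.
Proof.
move=> surj.
have full : row_full Amx.
  rewrite -sub1mx; apply/row_subP => i; apply/submxP.
  have [p [pB fp]] := surj _ (inB_emb (row i 1%:M)).
  exists (crd p); rewrite /Amx mul_rV_lin1 /= /gfun emb_crd // fp crd_emb //.
have U : Amx \in unitmx by rewrite -row_full_unit.
move=> p pB fp0.
have : crd p *m Amx = 0 by rewrite /Amx mul_rV_lin1 /= /gfun emb_crd // fp0 crd0.
move=> /(congr1 (mulmx^~ (invmx Amx))); rewrite mulmxK // mul0mx => c0.
by rewrite -(emb_crd pB) c0 emb0.
Qed.

Lemma fin_inj_surj :
  (forall p, inB p -> f p = 0 -> p = 0) ->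
  forall g, inB g -> exists p, inB p /\ f p = g.
Proof.
move=> inj.
have free : row_free Amx.
  apply: inj_row_free => v; rewrite /Amx mul_rV_lin1 /= /gfun => h.
  have : f (emb v) = 0 by rewrite -(emb_crd (stab (inB_emb v))) h emb0.
  by move/(inj _ (inB_emb v)) => e; rewrite -(crd_emb v) e crd0.
have U : Amx \in unitmx by rewrite -row_free_unit.
move=> g gB; exists (emb (crd g *m invmx Amx)); split; first exact: inB_emb.
rewrite -(emb_crd (stab (inB_emb _))).
have := mul_rV_lin1 gfun (crd g *m invmx Amx); rewrite /= /gfun => <-.
by rewrite -/Amx mulmxKV // emb_crd.
Qed.

End Fin.

Section Grad.
Variables (R : realType) (d : nat).
Implicit Types (p q h : {mpoly R[d]}).

Definition filt (P : pred 'X_{1..d}) p : {mpoly R[d]} :=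
  \sum_(m <- msupp p | P m) p@_m *: 'X_[m].

Lemma filt_coef P p m : (filt P p)@_m = if P m then p@_m else 0.
Proof.
rewrite /filt raddf_sum /=.
under eq_bigr => m' _ do rewrite mcoeffZ mcoeffX.
rewrite -big_filter.
have [mp|mp] := boolP (m \in msupp p); last first.
  rewrite big1_seq => [|m' /andP[_]]; last first.
    rewrite mem_filter => /andP[_ m'p].
    by case: eqP => [e|]; [move: mp; rewrite -e m'p | rewrite mulr0].
  by case: (P m) => //; apply/esym/eqP; rewrite mcoeff_eq0.
case Pm: (P m).
  rewrite (@bigD1_seq _ _ _ _ _ m) /= ?mem_filter ?Pm ?filter_uniq // eqxx mulr1 big1 ?addr0 //.
  by move=> m' /negbTE ->; rewrite mulr0.
rewrite big1_seq // => m' /andP[_]; rewrite mem_filter => /andP[Pm' _].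
by case: eqP => [e|]; [move: Pm'; rewrite e Pm | rewrite mulr0].
Qed.

Definition ord_ge k p := forall m, (mdeg m < k)%N -> p@_m = 0.
Definition hom k p := forall m, mdeg m != k -> p@_m = 0.

Lemma hom_ord k p : hom k p -> ord_ge k p.
Proof. by move=> h m lt; apply: h; rewrite neq_ltn lt. Qed.

Lemma ord_le k k' p : (k <= k')%N -> ord_ge k' p -> ord_ge k p.
Proof. by move=> le h m lt; apply: h; apply: leq_trans le. Qed.

Lemma ord_sum I (r : seq I) (P : pred I) (F : I -> {mpoly R[d]}) k :
  (forall i, P i -> ord_ge k (F i)) -> ord_ge k (\sum_(i <- r | P i) F i).
Proof. by move=> h m lt; rewrite raddf_sum big1 // => i Pi; apply: h. Qed.

Lemma hom_sum I (r : seq I) (P : pred I) (F : I -> {mpoly R[d]}) k :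
  (forall i, P i -> hom k (F i)) -> hom k (\sum_(i <- r | P i) F i).
Proof. by move=> h m lt; rewrite raddf_sum big1 // => i Pi; apply: h. Qed.

Lemma homM a k p q : hom a p -> hom k q -> hom (k + a) (p * q).
Proof.
move=> hp hq m ne; rewrite mcoeffM big1 // => [[k1 k2]] /= /eqP e.
have [e1|n1] := eqVneq (mdeg k1) a; last by rewrite hp ?mul0r.
rewrite hq ?mulr0 //; apply: contra ne => /eqP e2.
by rewrite e mdegD e1 e2 addnC.
Qed.

Lemma ordM a k p q : hom a p -> ord_ge k q -> ord_ge (k + a) (p * q).
Proof.
move=> hp hq m lt; rewrite mcoeffM big1 // => [[k1 k2]] /= /eqP e.
have [e1|n1] := eqVneq (mdeg k1) a; last by rewrite hp ?mul0r.
have dm := congr1 mdeg e; rewrite mdegD e1 in dm.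
rewrite hq ?mulr0 // -(ltn_add2l a) -dm addnC //.
Qed.

Lemma ord_der i k p : ord_ge k p -> ord_ge k.-1 (p^`M(i)).
Proof.
move=> h m lt; rewrite mcoeff_mderiv h ?mul0rn //.
rewrite mdegD mdeg1 addn1; case: k lt {h} => //.
Qed.

Lemma hom_der i k p : hom k p -> hom k.-1 (p^`M(i)).
Proof.
move=> h m ne; rewrite mcoeff_mderiv h ?mul0rn //.
rewrite mdegD mdeg1 addn1; case: k ne {h} => //.
Qed.

Lemma ord_lap k p : ord_ge k p -> ord_ge k.-2 (laplacian p).
Proof.
move=> h; apply: ord_sum => i _.
by have := ord_der i (ord_der i h).
Qed.

Lemma hom_lap k p : hom k p -> hom k.-2 (laplacian p).
Proof.
move=> h; apply: hom_sum => i _.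
by have := hom_der i (hom_der i h).
Qed.

Lemma lapD p q : laplacian (p + q) = laplacian p + laplacian q.
Proof. by rewrite /laplacian -big_split; apply: eq_bigr => i _; rewrite !mderivD. Qed.

Lemma lapZ a p : laplacian (a *: p) = a *: laplacian p.
Proof. by rewrite /laplacian scaler_sumr; apply: eq_bigr => i _; rewrite !mderivZ. Qed.

Lemma FischerL phi a p q :
  Fischer phi (a *: p + q) = a *: Fischer phi p + Fischer phi q.
Proof. by rewrite /Fischer mulrDr -scalerAr lapD lapZ. Qed.

Lemma Fischer_sum I (r : seq I) (P : pred I) (F : I -> {mpoly R[d]}) q :
  Fischer (\sum_(i <- r | P i) F i) q = \sum_(i <- r | P i) Fischer (F i) q.
Proof.
rewrite /Fischer; elim/big_rec2: _ => [|i x y Pi <-].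
  rewrite mul0r /laplacian big1 // => i _; by rewrite !mderiv0.
by rewrite mulrDl lapD.
Qed.

Lemma ordF a k phi q : hom a phi -> ord_ge k q -> ord_ge (k + a).-2 (Fischer phi q).
Proof. by move=> hp hq; apply: ord_lap; apply: ordM. Qed.

Lemma homF a k phi q : hom a phi -> hom k q -> hom (k + a).-2 (Fischer phi q).
Proof. by move=> hp hq; apply: hom_lap; apply: homM. Qed.

End Grad.

Unset Implicit Arguments.

Lemma inj_surj_bij (T : choiceType) (f : T -> T) :
  injective f -> (forall y, exists x, f x = y) -> bijective f.
Proof.
move=> inj surj.
have ex y : exists x, f x == y by have [x e] := surj y; exists x; apply/eqP.
exists (fun y => xchoose (ex y)) => [x|y]; last exact/eqP/(xchooseP (ex y)).
by apply: inj; apply/eqP/(xchooseP (ex (f x))).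
Qed.

Section Lin.
Variables (R : realType) (d : nat).
Variable M : {mpoly R[d]} -> {mpoly R[d]}.
Hypothesis Mlin : forall a p q, M (a *: p + q) = a *: M p + M q.
Lemma MD p q : M (p + q) = M p + M q.
Proof. by have := Mlin 1 p q; rewrite !scale1r. Qed.
Lemma MB p q : M (p - q) = M p - M q.
Proof. by have := Mlin (-1) q p; rewrite !scaleN1r => e; rewrite addrC e addrC. Qed.
Lemma M0 : M 0 = 0.
Proof. by have := MB 0 0; rewrite !subrr. Qed.
End Lin.

Section Main.
Variables (R : realType) (d : nat) (psi : {mpoly R[d]})
  (psi_ : nat -> {mpoly R[d]}) (t : nat).
Hypothesis ht : (2 <= t)%N.
Hypothesis hj : forall j, hom j (psi_ j).
Hypothesis epsi : psi = \sum_(2 <= j < t.+1) psi_ j.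

Local Notation L := (Fischer psi).
Local Notation L0 := (Fischer (psi_ 2%N)).

Lemma L_ord k q : ord_ge k q -> ord_ge k (L q).
Proof.
move=> hq; rewrite epsi Fischer_sum big_nat_cond; apply: ord_sum => j /andP[/andP[j2 _] _].
have le : (k <= (k + j).-2)%N.
  rewrite -subn2; lia.
exact: ord_le le (ordF (hj j) hq).
Qed.

Lemma L_diff k h : hom k h -> ord_ge k.+1 (L h - L0 h).
Proof.
move=> hh; rewrite epsi Fischer_sum big_ltn // addrC addKr big_nat_cond.
apply: ord_sum => j /andP[/andP[j3 _] _].
have le : (k.+1 <= (k + j).-2)%N.
  rewrite -subn2; lia.
exact: ord_le le (ordF (hj j) (hom_ord hh)).
Qed.

Lemma L0_hom k h : hom k h -> hom k (L0 h).
Proof. by move=> hh; have := homF (hj 2) hh; rewrite addn2. Qed.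

Section Inj.
Variable M : {mpoly R[d]} -> {mpoly R[d]}.
Hypothesis Mlin : forall a p q, M (a *: p + q) = a *: M p + M q.
Hypothesis Mord : forall k q, ord_ge k q -> ord_ge k (M q).
Hypothesis Mdiff : forall k h, hom k h -> ord_ge k.+1 (M h - L0 h).
Hypothesis L0inj : forall k h, hom k h -> L0 h = 0 -> h = 0.

Lemma inj_gen q : M q = 0 -> q = 0.
Proof.
move=> Mq0.
suff H : forall k, ord_ge k q.
  by apply/mpolyP => m; rewrite mcoeff0; apply: (H (mdeg m).+1).
elim => [|k IH]; first by move=> m.
set h := filt (fun m => mdeg m == k) q.
set r := q - h.
have hh : hom k h by move=> m ne; rewrite filt_coef (negbTE ne).
have hr : ord_ge k.+1 r.
  move=> m lt; rewrite mcoeffB filt_coef; have [e|ne] := eqVneq (mdeg m) k.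
    by rewrite subrr.
  by rewrite subr0; apply: IH; rewrite ltn_neqAle ne -ltnS.
have eq : q = h + r by rewrite /r addrC subrK.
have L0h0 : L0 h = 0.
  apply/mpolyP => m; rewrite mcoeff0.
  have [e|ne] := eqVneq (mdeg m) k; last exact: (L0_hom _ _ hh).
  have : (M q)@_m = 0 by rewrite Mq0 mcoeff0.
  have -> : M q = L0 h + (M h - L0 h) + M r.
    by rewrite {1}eq (MD _ _ _ Mlin); congr (_ + _); rewrite addrC subrK.
  have z1 := Mdiff _ _ hh m; have z2 := Mord _ _ hr m.
  by rewrite mcoeffD (mcoeffD m (L0 h)) z1 ?z2 ?e // !addr0.
have h0 := L0inj _ _ hh L0h0.
move=> m lt; have [e|ne] := eqVneq (mdeg m) k.
  by have := congr1 (mcoeff m) h0; rewrite /h filt_coef e eqxx mcoeff0.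
by apply: IH; rewrite ltn_neqAle ne -ltnS.
Qed.
End Inj.

Definition Ble (j : nat) : seq 'X_{1..d} := [seq val m | m <- enum {: 'X_{1..d < j.+1}}].

Lemma mem_Ble j m : (m \in Ble j) = (mdeg m <= j)%N.
Proof.
apply/idP/idP.
  by case/mapP => m' _ ->; rewrite -ltnS; exact: bmdeg.
move=> h; apply/mapP; exists (BMultinom (h : (mdeg m < j.+1)%N)) => //.
by rewrite mem_enum.
Qed.

Lemma uniq_Ble j : uniq (Ble j).
Proof. by rewrite map_inj_uniq ?enum_uniq //; exact: val_inj. Qed.

Hypothesis surj : forall f : {mpoly R[d]}, exists q, Fischer psi q = f.

Lemma L0inj_hom k h : hom k h -> L0 h = 0 -> h = 0.
Proof.
move=> hh L0h.
pose T p := filt (fun m => mdeg m <= k)%N (L p).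
have Tlin : forall a p q, T (a *: p + q) = a *: T p + T q.
  move=> a p q; apply/mpolyP => m; rewrite mcoeffD mcoeffZ !filt_coef FischerL.
  by case: ifP; rewrite ?mcoeffD ?mcoeffZ // mulr0 addr0.
have Tstab : forall p, inB (Ble k) p -> inB (Ble k) (T p).
  by move=> p _ m; rewrite filt_coef -mem_Ble => /negbTE ->.
have Tsurj : forall g, inB (Ble k) g -> exists p, inB (Ble k) p /\ T p = g.
  move=> g gB; have [q Lq] := surj g.
  exists (filt (fun m => mdeg m <= k)%N q); split.
    by move=> m; rewrite filt_coef -mem_Ble => /negbTE ->.
  set p := filt _ q.
  have hqp : ord_ge k.+1 (q - p).
    by move=> m lt; rewrite mcoeffB filt_coef -ltnS lt subrr.
  apply/mpolyP => m; rewrite filt_coef; case: ifP => le; last first.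
    by rewrite gB // mem_Ble le.
  have : L q = L p + L (q - p) by rewrite -(MD _ _ _ (@FischerL _ _ psi)) addrC subrK.
  rewrite Lq => ->; rewrite mcoeffD (L_ord _ _ hqp) ?addr0 //.
have hB : inB (Ble k) h.
  move=> m; rewrite mem_Ble -ltnNge => lt; apply: hh; by rewrite gtn_eqF.
apply: (fin_surj_inj (uniq_Ble k) Tlin Tsurj hB).
apply/mpolyP => m; rewrite filt_coef mcoeff0; case: ifP => // le.
have -> : L h = L0 h + (L h - L0 h) by rewrite addrC subrK.
by rewrite (mcoeffD m (L0 h)) (L_diff _ _ hh) ?L0h ?mcoeff0 ?addr0.
Qed.

Lemma L0_surj_hom k g : hom k g -> exists p, L0 p = g.
Proof.
pose B := filter (fun m => mdeg m == k) (Ble k).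
have memB m : (m \in B) = (mdeg m == k).
  by rewrite mem_filter mem_Ble; case: eqP => // ->; rewrite leqnn.
have inBh p : inB B p <-> hom k p.
  by split => h m; [rewrite -memB; apply: h | rewrite memB; apply: h].
have uB : uniq B by rewrite filter_uniq // uniq_Ble.
move=> hg.
have Stab : forall p, inB B p -> inB B (L0 p).
  by move=> p hp; apply/inBh; apply: L0_hom; apply/inBh.
have Inj : forall p, inB B p -> L0 p = 0 -> p = 0.
  by move=> p hp; apply: L0inj_hom; apply/inBh.
have [p [_ e]] := fin_inj_surj uB (@FischerL _ _ (psi_ 2%N)) Stab Inj (proj2 (inBh _ g) hg).
by exists p.
Qed.

Lemma L0_surj f : exists q, L0 q = f.
Proof.
have H : forall N, exists q, L0 q = filt (fun m => (mdeg m < N)%N) f.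
  elim => [|N [q Hq]].
    exists 0; rewrite (M0 _ _ _ (@FischerL _ _ (psi_ 2%N))).
    by apply/mpolyP => m; rewrite filt_coef mcoeff0.
  have [p Hp] : exists p, L0 p = filt (fun m => mdeg m == N) f.
    by apply: (L0_surj_hom N) => m ne; rewrite filt_coef (negbTE ne).
  exists (q + p); rewrite (MD _ _ _ (@FischerL _ _ _)) Hq Hp.
  apply/mpolyP => m; rewrite mcoeffD !filt_coef.
  have [e|ne] := eqVneq (mdeg m) N; first by rewrite e ltnn ltnSn add0r.
  by rewrite addr0 ltnS [in RHS]leq_eqVlt (negbTE ne).
have [q Hq] := H (msize f); exists q; rewrite Hq.
apply/mpolyP => m; rewrite filt_coef; case: ifP => // nlt.
apply/esym/eqP; rewrite mcoeff_eq0; apply/negP => /msize_mdeg_lt.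
by rewrite nlt.
Qed.

Lemma L0_ord k q : ord_ge k q -> ord_ge k (L0 q).
Proof. by move=> hq; have := ordF (hj 2) hq; rewrite addn2. Qed.

Lemma L0_diff k h : hom k h -> ord_ge k.+1 (L0 h - L0 h).
Proof. by move=> _ m _; rewrite subrr mcoeff0. Qed.

Lemma ker_inj (M : {mpoly R[d]} -> {mpoly R[d]}) :
  (forall a p q, M (a *: p + q) = a *: M p + M q) ->
  (forall q, M q = 0 -> q = 0) -> injective M.
Proof.
move=> Ml Mk x y e; apply/eqP; rewrite -subr_eq0; apply/eqP; apply: Mk.
by rewrite (MB _ _ _ Ml) e subrr.
Qed.

Lemma bij_L0 : bijective L0.
Proof.
apply: inj_surj_bij; last exact: L0_surj.
apply: ker_inj; first exact: FischerL.
exact: (inj_gen _ (@FischerL _ _ _) L0_ord L0_diff L0inj_hom).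
Qed.

Lemma bij_L : bijective L.
Proof.
apply: inj_surj_bij; last exact: surj.
apply: ker_inj; first exact: FischerL.
exact: (inj_gen _ (@FischerL _ _ _) L_ord L_diff L0inj_hom).
Qed.

End Main.


Theorem mainTheorem6 (R : realType) (d : nat) (psi : {mpoly R[d]})
  (psi_ : nat -> {mpoly R[d]}) (t : nat) :
  zero_mult_at0 psi 2 ->
  (2 <= t)%N ->
  (forall j, psi_ j \is j.-homog) ->
  psi = \sum_(2 <= j < t.+1) psi_ j ->
  psi_ 2%N != 0 -> psi_ t != 0 ->
  (forall f : {mpoly R[d]}, exists q, Fischer psi q = f) ->
  bijective (Fischer (psi_ 2%N)) /\ bijective (Fischer psi).
Proof.
move=> _ ht hj epsi _ _ surj.
have hj' : forall j, hom j (psi_ j).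
  by move=> j m ne; exact: (dhomog_nemf_coeff (hj j) ne).
split; [exact: (bij_L0 _ _ _ _ _ ht hj' epsi surj) | exact: (bij_L _ _ _ _ _ ht hj' epsi surj)].
Qed.
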